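(* Let $n$ be a positive integer and let $\alpha,\beta,\gamma,\delta: \mathcal{P}(n) \to [0,\infty)$ satisfy \[ \alpha(A)\beta(B) \leq \gamma(A \cup B)\,\delta(A \cap B) \quad \text{for all } A,B \in \mathcal{P}(n). \] Then \[ \Big(\sum_{A \in \mathcal{P}(n)} \alpha(A)q^{|A|}\Big)\Big( \sum_{B \in \mathcal{P}(n)} \beta(B)q^{|B|}\Big) \ll \Big(\sum_{C \in \mathcal{P}(n)} \gamma(C)q^{|C|}\Big)\Big( \sum_{D \in \mathcal{P}(n)} \delta(D)q^{|D|}\Big). \] Equivalently, for every integer $k \ge 0$, \[ \sum_{|A|+|B|=k}\alpha(A)\beta(B) \le \sum_{|C|+|D|=k}\gamma(C)\delta(D), \] where the sums range over pairs of subsets of $[n]$.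
   Context: $[n]=\{1,\dots,n\}$ and $\mathcal{P}(n)$ denotes the power set of $[n]$. For real polynomials $P(q),R(q)$, $P(q) \ll R(q)$ means that every coefficient of $R(q)-P(q)$ is a non-negative real number. *)

(* Defs.v *)
From HB Require Import structures.
From mathcomp Require Import all_boot all_order all_algebra.
Set Implicit Arguments. Unset Strict Implicit. Unset Printing Implicit Defensive.
Import Order.TTheory GRing.Theory Num.Theory.
Local Open Scope ring_scope.

Definition poly_ll (R : numDomainType) (P Q : {poly R}) : Prop :=
  forall i : nat, 0 <= (Q - P)`_i.

Definition setgen (R : numDomainType) (n : nat) (f : {set 'I_n} -> R) : {poly R} :=
  \sum_(A : {set 'I_n}) f A *: 'X^#|A|.

(* Main.v *)
Require Import Defs.
From HB Require Import structures.
From mathcomp Require Import all_boot all_order all_algebra.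
Import Order.TTheory GRing.Theory Num.Theory.
Local Open Scope ring_scope.


Lemma real_lemma (R : realFieldType) (x y u v : R) :
  0 <= x -> 0 <= y -> 0 <= v -> x <= u -> y <= u -> x * y <= u * v -> x + y <= v + u.
Proof.
move=> x0 y0 v0 xu yu xyuv.
have u0 : 0 <= u by apply: le_trans xu.
move: u0; rewrite le0r => /orP[/eqP u00|upos].
  have x00 : x = 0 by apply/eqP; rewrite eq_le x0 andbT -u00.
  have y00 : y = 0 by apply/eqP; rewrite eq_le y0 andbT -u00.
  rewrite x00 y00 u00 !addr0.
  by [].
rewrite -(ler_pM2l upos).
have h1 : u * x + u * y <= u * u + x * y.
  have : (u - x) * y <= (u - x) * u by apply: ler_wpM2l; rewrite ?subr_ge0.
  rewrite !mulrBl lerBlDr [u * u - _ + _]addrC addrA lerBrDr => H.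
  by rewrite [u * x]mulrC addrC [u * u + _]addrC.
apply: le_trans; first by rewrite mulrDr; exact: h1.
by rewrite mulrDr addrC lerD2r.
Qed.

Lemma n1_lemma (R : realFieldType) (a0 a1 b0 b1 c0 c1 d0 d1 : R) :
  0 <= a0 -> 0 <= a1 -> 0 <= b0 -> 0 <= b1 ->
  0 <= c0 -> 0 <= c1 -> 0 <= d0 -> 0 <= d1 ->
  a0 * b0 <= c0 * d0 -> a0 * b1 <= c1 * d0 -> a1 * b0 <= c1 * d0 ->
  a1 * b1 <= c1 * d1 -> (a0 + a1) * (b0 + b1) <= (c0 + c1) * (d0 + d1).
Proof.
move=> ha0 ha1 hb0 hb1 hc0 hc1 hd0 hd1 h00 h01 h10 h11.
have key : a0 * b1 + a1 * b0 <= c0 * d1 + c1 * d0.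
  apply: real_lemma; rewrite ?mulr_ge0 //.
  have -> : a0 * b1 * (a1 * b0) = (a0 * b0) * (a1 * b1).
    by rewrite mulrACA [b1 * b0]mulrC -mulrACA.
  have -> : c1 * d0 * (c0 * d1) = (c0 * d0) * (c1 * d1).
    by rewrite mulrACA [c1 * c0]mulrC -mulrACA.
  by apply: ler_pM; rewrite ?mulr_ge0.
rewrite !mulrDl !mulrDr -addrA [a0 * b1 + _]addrA addrA.
rewrite -[X in _ <= X]addrA [c0 * d1 + _]addrA [X in _ <= X]addrA.
by apply: lerD => //; apply: lerD.
Qed.

Lemma split_sub (R : realFieldType) (T : finType) (S : {set T}) (x : T)
  (f : {set T} -> R) : x \in S ->
  \sum_(A : {set T} | A \subset S) f A = \sum_(A : {set T} | A \subset S :\ x) (f A + f (x |: A)).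
Proof.
move=> xS; rewrite big_split /= [LHS](bigID (fun A : {set T} => x \in A)) /= addrC.
congr (_ + _).
  by apply: eq_bigl => A; rewrite subsetD1.
rewrite (reindex_onto (fun A => x |: A) (fun A => A :\ x)); last first.
  by move=> A /andP[_ xA]; rewrite setD1K.
apply: eq_bigl => A; rewrite subsetD1 setU11 subUset sub1set xS /=.
case xA: (x \in A).
  have -> : ((x |: A) :\ x == A) = false.
    by apply/negbTE/negP=> /eqP E; move: xA; rewrite -E !inE eqxx.
  by rewrite !andbT andbF.
have -> : (x |: A) :\ x = A.
  by apply/setP => y; rewrite !inE; case: (eqVneq y x) => // ->; rewrite xA.
by rewrite eqxx !andbT.
Qed.

Lemma AD_base (R : realFieldType) (T : finType) (f : {set T} -> R) :
  \sum_(A : {set T} | A \subset set0) f A = f set0.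
Proof. by rewrite (eq_bigl (fun A => A == set0)) ?big_pred1_eq // => A; rewrite subset0. Qed.

Ltac setbash xA xB :=
  apply/setP => ?; rewrite !inE; case: eqP => [->|_];
  rewrite ?(negbTE xA) ?(negbTE xB) /= ?orbT ?orbF ?andbF ?andbT //.

Lemma AD_sub (R : realFieldType) (T : finType) (k : nat) :
  forall (S : {set T}), (#|S| <= k)%N ->
  forall (al be ga de : {set T} -> R),
  (forall A : {set T}, 0 <= al A) -> (forall A : {set T}, 0 <= be A) ->
  (forall A : {set T}, 0 <= ga A) -> (forall A : {set T}, 0 <= de A) ->
  (forall A B : {set T}, A \subset S -> B \subset S ->
       al A * be B <= ga (A :|: B) * de (A :&: B)) ->
  (\sum_(A : {set T} | A \subset S) al A) * (\sum_(A : {set T} | A \subset S) be A)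
  <= (\sum_(A : {set T} | A \subset S) ga A) * (\sum_(A : {set T} | A \subset S) de A).
Proof.
elim: k => [|k IH] S hS al be ga de ha hb hc hd h.
  have -> : S = set0 by apply/eqP; rewrite -cards_eq0 -leqn0.
  by rewrite !AD_base; have := h set0 set0 (sub0set _) (sub0set _); rewrite setU0 setI0.
case: (set_0Vmem S) => [->|[x xS]].
  by rewrite !AD_base; have := h set0 set0 (sub0set _) (sub0set _); rewrite setU0 setI0.
rewrite (split_sub _ _ _ _ al xS) (split_sub _ _ _ _ be xS) (split_sub _ _ _ _ ga xS) (split_sub _ _ _ _ de xS).
apply: (IH (S :\ x)).
- by move: hS; rewrite (cardsD1 x S) xS.
- by move=> A; rewrite addr_ge0.
- by move=> A; rewrite addr_ge0.
- by move=> A; rewrite addr_ge0.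
- by move=> A; rewrite addr_ge0.
move=> A B; rewrite !subsetD1 => /andP[AS xA] /andP[BS xB].
have xAS : x |: A \subset S by rewrite subUset sub1set xS.
have xBS : x |: B \subset S by rewrite subUset sub1set xS.
apply: n1_lemma => //.
- exact: h.
- have := h _ _ AS xBS.
  have -> : A :|: (x |: B) = x |: (A :|: B) by setbash xA xB.
  by have -> : A :&: (x |: B) = A :&: B by setbash xA xB.
- have := h _ _ xAS BS.
  have -> : (x |: A) :|: B = x |: (A :|: B) by setbash xA xB.
  by have -> : (x |: A) :&: B = A :&: B by setbash xA xB.
- have := h _ _ xAS xBS.
  have -> : (x |: A) :|: (x |: B) = x |: (A :|: B) by setbash xA xB.
  by have -> : (x |: A) :&: (x |: B) = x |: (A :&: B) by setbash xA xB.
Qed.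

Definition rc (T : finType) (L U A : {set T}) := L :|: (U :\: A).
Arguments rc {T}.

Section RC.
Variables (T : finType) (L U A B : {set T}).
Hypotheses (LA : L \subset A) (AU : A \subset U) (LB : L \subset B) (BU : B \subset U).

Lemma rc_U : A :|: rc L U A = U.
Proof.
apply/setP=> y; rewrite !inE.
have h1 : (y \in L) ==> (y \in A) by apply/implyP/(subsetP LA).
have h2 : (y \in A) ==> (y \in U) by apply/implyP/(subsetP AU).
by move: h1 h2; case: (y \in L); case: (y \in A); case: (y \in U).
Qed.

Lemma rc_I : A :&: rc L U A = L.
Proof.
apply/setP=> y; rewrite !inE.
have h1 : (y \in L) ==> (y \in A) by apply/implyP/(subsetP LA).
have h2 : (y \in A) ==> (y \in U) by apply/implyP/(subsetP AU).
by move: h1 h2; case: (y \in L); case: (y \in A); case: (y \in U).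
Qed.

Lemma rc_rc : rc L U (rc L U A) = A.
Proof.
apply/setP=> y; rewrite !inE.
have h1 : (y \in L) ==> (y \in A) by apply/implyP/(subsetP LA).
have h2 : (y \in A) ==> (y \in U) by apply/implyP/(subsetP AU).
by move: h1 h2; case: (y \in L); case: (y \in A); case: (y \in U).
Qed.

Lemma rc_sub : (L \subset rc L U A) && (rc L U A \subset U).
Proof.
rewrite subsetUl /=; apply/subsetP=> y; rewrite !inE.
have h1 : (y \in L) ==> (y \in A) by apply/implyP/(subsetP LA).
have h2 : (y \in A) ==> (y \in U) by apply/implyP/(subsetP AU).
by move: h1 h2; case: (y \in L); case: (y \in A); case: (y \in U).
Qed.

Lemma rcUI : rc L U B :|: rc L U A = rc L U (A :&: B).
Proof.
apply/setP=> y; rewrite !inE.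
have h1 : (y \in L) ==> (y \in A) by apply/implyP/(subsetP LA).
have h2 : (y \in A) ==> (y \in U) by apply/implyP/(subsetP AU).
have h3 : (y \in L) ==> (y \in B) by apply/implyP/(subsetP LB).
have h4 : (y \in B) ==> (y \in U) by apply/implyP/(subsetP BU).
by move: h1 h2 h3 h4; case: (y \in L); case: (y \in A); case: (y \in B); case: (y \in U).
Qed.

Lemma rcIU : rc L U B :&: rc L U A = rc L U (A :|: B).
Proof.
apply/setP=> y; rewrite !inE.
have h1 : (y \in L) ==> (y \in A) by apply/implyP/(subsetP LA).
have h2 : (y \in A) ==> (y \in U) by apply/implyP/(subsetP AU).
have h3 : (y \in L) ==> (y \in B) by apply/implyP/(subsetP LB).
have h4 : (y \in B) ==> (y \in U) by apply/implyP/(subsetP BU).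
by move: h1 h2 h3 h4; case: (y \in L); case: (y \in A); case: (y \in B); case: (y \in U).
Qed.

Lemma IUI : ((L \subset A :|: B) && (A :|: B \subset U)) && ((L \subset A :&: B) && (A :&: B \subset U)).
Proof.
rewrite subUset AU BU subsetI LA LB /= andbT.
by rewrite (subset_trans LA (subsetUl _ _)) (subset_trans (subsetIl _ _) AU).
Qed.
End RC.

Lemma AD_full (R : realFieldType) (T : finType) (al be ga de : {set T} -> R) :
  (forall A, 0 <= al A) -> (forall A, 0 <= be A) ->
  (forall A, 0 <= ga A) -> (forall A, 0 <= de A) ->
  (forall A B, al A * be B <= ga (A :|: B) * de (A :&: B)) ->
  (\sum_A al A) * (\sum_A be A) <= (\sum_A ga A) * (\sum_A de A).
Proof.
move=> ha hb hc hd h.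
have E (f : {set T} -> R) : \sum_(A : {set T} | A \subset setT) f A = \sum_A f A.
  by apply: eq_bigl => A; rewrite subsetT.
rewrite -!E; apply: (AD_sub R T #|[set: T]| setT (leqnn _)) => // A B _ _.
Qed.

Lemma claim (R : realFieldType) (T : finType) (al be ga de : {set T} -> R) :
  (forall A, 0 <= al A) -> (forall A, 0 <= be A) ->
  (forall A, 0 <= ga A) -> (forall A, 0 <= de A) ->
  (forall A B, al A * be B <= ga (A :|: B) * de (A :&: B)) ->
  forall L U : {set T},
  \sum_(A : {set T}) (if (L \subset A) && (A \subset U) then al A * be (rc L U A) else 0)
  <= \sum_(A : {set T}) (if (L \subset A) && (A \subset U) then ga A * de (rc L U A) else 0).
Proof.
move=> ha hb hc hd h L U.
case LU: (L \subset U); last first.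
  rewrite !big1 // => A _; case: ifP => // /andP[LA AU];
  by rewrite (subset_trans LA AU) in LU.
pose I (A : {set T}) := (L \subset A) && (A \subset U).
pose phi (A : {set T}) := if I A then al A * be (rc L U A) else 0.
pose phit (A : {set T}) := if I A then al (rc L U A) * be A else 0.
pose psi (A : {set T}) := if I A then ga A * de (rc L U A) else 0.
pose psit (A : {set T}) := if I A then ga (rc L U A) * de A else 0.
have Irc (A : {set T}) : I A -> I (rc L U A).
  by case/andP=> LA AU; apply: rc_sub.
have rcrc (A : {set T}) : I A -> rc L U (rc L U A) = A.
  by case/andP=> LA AU; apply: rc_rc.
pose f (A : {set T}) := if I A then rc L U A else A.
have finv : involutive f.
  by move=> A; rewrite /f; case IA: (I A); rewrite ?Irc ?rcrc ?IA.
have Sphi : \sum_A phit A = \sum_A phi A.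
  rewrite (reindex_inj (inv_inj finv)); apply: eq_bigr => A _.
  by rewrite /phit /phi /f; case IA: (I A); rewrite ?Irc ?rcrc ?IA.
have Spsi : \sum_A psit A = \sum_A psi A.
  rewrite (reindex_inj (inv_inj finv)); apply: eq_bigr => A _.
  by rewrite /psit /psi /f; case IA: (I A); rewrite ?Irc ?rcrc ?IA.
have AD := AD_full R T phi phit psi psit.
rewrite Sphi Spsi in AD.
have nphi A : 0 <= phi A by rewrite /phi; case: ifP; rewrite ?mulr_ge0.
have npsi A : 0 <= psi A by rewrite /psi; case: ifP; rewrite ?mulr_ge0.
have nphit A : 0 <= phit A by rewrite /phit; case: ifP; rewrite ?mulr_ge0.
have npsit A : 0 <= psit A by rewrite /psit; case: ifP; rewrite ?mulr_ge0.
have hyp A B : phi A * phit B <= psi (A :|: B) * psit (A :&: B).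
  case IA: (I A); last first.
    by rewrite /phi IA mul0r; apply: mulr_ge0; [exact: npsi | exact: npsit].
  case IB: (I B); last first.
    by rewrite /phit IB mulr0; apply: mulr_ge0; [exact: npsi | exact: npsit].
  rewrite /phi /phit IA IB.
  move: IA IB => /andP[LA AU] /andP[LB BU].
  have /andP[IU II] := IUI T L U A B LA AU LB BU.
  rewrite /psi /psit /I IU II.
  rewrite -(rcUI T L U A B LA AU LB BU) -(rcIU T L U A B LA AU LB BU).
  rewrite mulrACA [be _ * be _]mulrC -mulrACA.
  rewrite [X in _ <= X]mulrACA [de _ * de _]mulrC -[X in _ <= X]mulrACA.
  by apply: ler_pM; rewrite ?mulr_ge0.
have key := AD nphi nphit npsi npsit hyp.
suff : \sum_A phi A <= \sum_A psi A by [].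
rewrite -(ler_pXn2r (_ : (0 < 2)%N)) ?nnegrE ?sumr_ge0 // !expr2.
Qed.

Lemma regroupA (R : realFieldType) (T : finType) (A : {set T}) (G : {set T} -> R) :
  \sum_(B : {set T}) G B =
  \sum_(L : {set T}) \sum_(U : {set T})
     (if (L \subset A) && (A \subset U) then G (rc L U A) else 0).
Proof.
have E (B L U : {set T}) : ((L == A :&: B) && (U == A :|: B)) =
    ((L \subset A) && (A \subset U)) && (B == rc L U A).
  apply/andP/idP.
    case=> /eqP -> /eqP ->; rewrite subsetIl subsetUl /=.
    apply/eqP/setP => y; rewrite !inE.
    by case: (y \in A); case: (y \in B).
  case/andP=> /andP[LA AU] /eqP ->.
  by rewrite (rc_I T L U A LA AU) (rc_U T L U A LA AU) !eqxx.
transitivity (\sum_(B : {set T}) \sum_(L : {set T}) \sum_(U : {set T})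
   (if (L == A :&: B) && (U == A :|: B) then G B else 0)).
  apply: eq_bigr => B _.
  rewrite (bigD1 (A :&: B)) //= (bigD1 (A :|: B)) //= !eqxx /=.
  rewrite big1 ?addr0; last by move=> U /negbTE ->.
  rewrite big1 ?addr0 // => L /negbTE -> /=.
  by rewrite big1.
rewrite exchange_big; apply: eq_bigr => L _.
rewrite exchange_big; apply: eq_bigr => U _.
under eq_bigr do rewrite E.
case: ifP => c /=.
  by rewrite -big_mkcond big_pred1_eq.
by rewrite big1.
Qed.

Lemma regroup (R : realFieldType) (T : finType) (al be : {set T} -> R) (i : nat) :
  \sum_(A : {set T}) \sum_(B : {set T}) (al A * be B) *+ (#|A| + #|B| == i)%N =
  \sum_(L : {set T}) \sum_(U : {set T})
    (\sum_(A : {set T}) (if (L \subset A) && (A \subset U) then al A * be (rc L U A) else 0))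
      *+ (#|U| + #|L| == i)%N.
Proof.
under eq_bigr => A _ do rewrite (regroupA R T A (fun B => (al A * be B) *+ (#|A| + #|B| == i)%N)).
rewrite exchange_big; apply: eq_bigr => L _.
rewrite exchange_big; apply: eq_bigr => U _.
rewrite -sumrMnl; apply: eq_bigr => A _.
case: ifP => [/andP[LA AU]|_]; last by rewrite mul0rn.
by rewrite -cardsUI (rc_U T L U A LA AU) (rc_I T L U A LA AU).
Qed.

Lemma coef_prod (R : realFieldType) (n : nat) (f g : {set 'I_n} -> R) (i : nat) :
  (setgen f * setgen g)`_i =
  \sum_(A : {set 'I_n}) \sum_(B : {set 'I_n}) (f A * g B) *+ (#|A| + #|B| == i)%N.
Proof.
rewrite /setgen mulr_suml coef_sum; apply: eq_bigr => A _.
rewrite mulr_sumr coef_sum; apply: eq_bigr => B _.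
rewrite -scalerAl -scalerAr -exprD !coefZ coefXn mulrA mulr_natr.
by rewrite eq_sym.
Qed.

Theorem theorem2p1 (R : realFieldType) (n : nat) (hn : (0 < n)%N)
  (alpha beta gamma delta : {set 'I_n} -> R)
  (ha : forall A, 0 <= alpha A) (hb : forall A, 0 <= beta A)
  (hc : forall A, 0 <= gamma A) (hd : forall A, 0 <= delta A)
  (h : forall A B : {set 'I_n},
         alpha A * beta B <= gamma (A :|: B) * delta (A :&: B)) :
  poly_ll (setgen alpha * setgen beta) (setgen gamma * setgen delta).
Proof.
move=> i; rewrite coefB subr_ge0 !coef_prod !regroup.
apply: ler_sum => L _; apply: ler_sum => U _.
apply: ler_wMn2r.
exact: (claim R _ alpha beta gamma delta ha hb hc hd h L U).
Qed.
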